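(* Let $\hat f:L^2(\Omega,\mathcal{F},\mathbb{P};H)\to U$ be Fréchet differentiable at $X_0\in L^2(\Omega,H)$. Then $$m_{D\hat f(X_0)}(A)u:=D\hat f(X_0)(u\mathbf{1}_A),\qquad A\in\mathcal{F},\ u\in H,$$ defines a vector measure $m_{D\hat f(X_0)}:\mathcal{F}\to L(H,U)$, i.e. $m_{D\hat f(X_0)}(\emptyset)=0$ and $m_{D\hat f(X_0)}(\bigcup_i A_i)=\sum_i m_{D\hat f(X_0)}(A_i)$ (convergence in operator norm) for every sequence of pairwise disjoint $A_i\in\mathcal{F}$.
   Context: $(\Omega,\mathcal{F},\mathbb{P})$ is a probability space; $H,U$ are separable real Hilbert spaces; $L(H,U)$ denotes bounded linear operators with the operator norm. *)

(* Defs.v *)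
From HB Require Import structures.
From mathcomp Require Import all_boot all_order all_algebra.
From mathcomp Require Import all_classical all_reals all_analysis.
Set Implicit Arguments. Unset Strict Implicit. Unset Printing Implicit Defensive.
Import Order.TTheory GRing.Theory Num.Theory.
Import numFieldNormedType.Exports.
Local Open Scope classical_set_scope.
Local Open Scope ring_scope.

Section Defs.
Context {R : realType}.

Definition separable_hilbert (H : completeNormedModType R) (ip : H -> H -> R) :=
  [/\ (forall x y, ip x y = ip y x),
      (forall a x y z, ip (a *: x + y) z = a * ip x z + ip y z),
      (forall x, `|x| = Num.sqrt (ip x x)) &
      (exists s : nat -> H, dense (range s))].

Context {d : measure_display} {T : measurableType d} (P : probability T R)
        {H : normedModType R}.

Definition strongly_measurable (X : T -> H) :=
  exists g : nat -> T -> H,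
    (forall n, finite_set (range (g n)) /\
               forall y, measurable (g n @^-1` [set y])) /\
    (forall w, g n w @[n --> \oo] --> X w).

Definition inL2 (X : T -> H) :=
  strongly_measurable X /\ (\int[P]_w ((`|X w| ^+ 2)%:E) < +oo)%E.

Definition L2norm (X : T -> H) : R :=
  Num.sqrt (fine (\int[P]_w ((`|X w| ^+ 2)%:E))).

Context {U : normedModType R}.

(* fh : L^2(Omega;H) -> U, represented on representatives; it must respect
   P-a.e. equality on L^2. *)
Definition L2_map (fh : (T -> H) -> U) :=
  forall X Y, inL2 X -> inL2 Y -> {ae P, forall w, X w = Y w} -> fh X = fh Y.

Definition frechet_derivative (fh : (T -> H) -> U) (X0 : T -> H)
    (D : (T -> H) -> U) :=
  [/\ (forall a X Y, inL2 X -> inL2 Y ->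
         D (fun w => a *: X w + Y w) = a *: D X + D Y),
      (exists C : R, forall Y, inL2 Y -> `|D Y| <= C * L2norm Y) &
      (forall eps : R, 0 < eps -> exists delta : R, 0 < delta /\
         forall Y, inL2 Y -> L2norm Y < delta ->
           `|fh (fun w => X0 w + Y w) - fh X0 - D Y| <= eps * L2norm Y)].

Definition frechet_differentiable (fh : (T -> H) -> U) (X0 : T -> H) :=
  exists D, frechet_derivative fh X0 D.

Definition mD (D : (T -> H) -> U) (A : set T) : H -> U :=
  fun u => D (fun w => \1_A w *: u).

End Defs.

Definition bounded_linear {R : realType} {H U : normedModType R} (L : H -> U) :=
  (forall (a : R) x y, L (a *: x + y) = a *: L x + L y) /\
  exists C : R, forall x, `|L x| <= C * `|x|.

Definition opnorm {R : realType} {H U : normedModType R} (L : H -> U) : R :=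
  sup [set `|L u| | u in [set u : H | `|u| <= 1]].

(* Main.v *)
Require Import Defs.
From HB Require Import structures.
From mathcomp Require Import all_boot all_order all_algebra.
From mathcomp Require Import all_classical all_reals all_analysis.
Import Order.TTheory GRing.Theory Num.Theory.
Import numFieldNormedType.Exports.
Local Open Scope classical_set_scope.
Local Open Scope ring_scope.

Section S.
Context (R : realType) (d : measure_display) (T : measurableType d)
  (P : probability T R) (H : normedModType R).

Lemma ind_norm2 (B : set T) (u : H) w :
  `|\1_B w *: u| ^+ 2 = `|u| ^+ 2 * \1_B w.
Proof.
rewrite indicE; case: (w \in B) => /=.
  by rewrite scale1r mulr1.
by rewrite scale0r normr0 expr0n /= mulr0.
Qed.

Lemma ind_int (B : set T) (u : H) : measurable B ->
  (\int[P]_w ((`|\1_B w *: u| ^+ 2)%:E) = (`|u| ^+ 2)%:E * P B)%E.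
Proof.
move=> mB.
under eq_integral do rewrite ind_norm2 EFinM.
rewrite ge0_integralZl_EFin ?sqr_ge0 //. have := @integral_indic _ _ R P setT measurableT B mB. rewrite setIT => <- //. by apply/measurable_realfun.measurable_EFinP; exact: measurable_realfun.measurable_indic.
Qed.

Lemma finePB (B : set T) : measurable B -> P B = (fine (P B))%:E.
Proof. move=> mB; rewrite fineK // fin_num_measure //. Qed.

Lemma ind_L2norm (B : set T) (u : H) : measurable B ->
  L2norm P (fun w => \1_B w *: u) = `|u| * Num.sqrt (fine (P B)).
Proof.
move=> mB; rewrite /L2norm ind_int // (@finePB B mB) -EFinM /=.
rewrite sqrtrM ?sqr_ge0 // sqrtr_sqr ger0_norm //.
Qed.

Lemma fineP_le1 (B : set T) : measurable B -> 0 <= fine (P B) <= 1.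
Proof.
move=> mB; have E := @finePB B mB.
apply/andP; split; first by rewrite fine_ge0.
rewrite -lee_fin -E -(probability_setT P); apply: le_measure; rewrite ?inE //.
Qed.

Lemma ind_inL2 (B : set T) (u : H) : measurable B ->
  inL2 P (fun w => \1_B w *: u).
Proof.
move=> mB; split.
  exists (fun _ w => \1_B w *: u); split; last by move=> w; exact: cvg_cst.
  move=> _; split.
    apply: (@sub_finite_set _ _ ([set 0] `|` [set u])).
      by move=> y [w _ <-]; rewrite indicE; case: (w \in B); [right; rewrite scale1r | left; rewrite scale0r].
    by rewrite finite_setU; split; exact: finite_set1.
  move=> y.
  have -> : (fun w => \1_B w *: u) @^-1` [set y] =
     (B `&` [set _ | u = y]) `|` (~` B `&` [set _ | 0 = y]).
    apply/seteqP; split => w /=.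
      rewrite indicE; case: (pselect (B w)) => wB.
        by rewrite mem_set // scale1r => ->; left.
      by rewrite memNset // scale0r => ->; right.
    by case=> -[wB <-]; rewrite indicE; [rewrite mem_set // scale1r | rewrite memNset // scale0r].
  have cst_m (Q : Prop) : measurable [set _ : T | Q].
    by case: (pselect Q) => q; [rewrite (_ : [set _ | Q] = setT) //; apply/seteqP; split => // |
      rewrite (_ : [set _ | Q] = set0) //; apply/seteqP; split => //].
  by apply: measurableU; apply: measurableI => //; exact: measurableC.
rewrite ind_int // (@finePB B mB) -EFinM; exact: ltry.
Qed.
End S.

Theorem lemma1p2 (R : realType) (d : measure_display) (T : measurableType d)
  (P : probability T R)
  (H : completeNormedModType R) (ipH : H -> H -> R)
  (U : completeNormedModType R) (ipU : U -> U -> R)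
  (fh : (T -> H) -> U) (X0 : T -> H) (D : (T -> H) -> U) :
  separable_hilbert ipH -> separable_hilbert ipU ->
  L2_map P fh -> inL2 P X0 ->
  frechet_derivative P fh X0 D ->
  (forall A, measurable A -> bounded_linear (mD D A)) /\
  (forall u, mD D set0 u = 0) /\
  (forall A : nat -> set T, (forall i, measurable (A i)) ->
     trivIset setT A ->
     opnorm (fun u => mD D (\bigcup_i A i) u - \sum_(i < n) mD D (A i) u)
       @[n --> \oo] --> 0).
Proof.
move=> _ _ _ _ [Dlin [C DC] _].
have bnd B u : measurable B ->
    `|mD D B u| <= `|C| * (`|u| * Num.sqrt (fine (P B))).
  move=> mB; rewrite /mD -ind_L2norm //.
  apply: le_trans (DC _ (@ind_inL2 _ _ _ P _ _ u mB)) _.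
  apply: ler_wpM2r; first by rewrite /L2norm sqrtr_ge0.
  exact: ler_norm.
have addD B1 B2 B u : measurable B1 -> measurable B2 ->
    (forall w, \1_B w = \1_B1 w + \1_B2 w :> R) ->
    mD D B u = mD D B1 u + mD D B2 u.
  move=> m1 m2 hB.
  rewrite -[mD D B1 u]scale1r /mD -Dlin; try exact: (@ind_inL2 _ _ _ P).
  congr D; apply: funext => w; rewrite hB scale1r scalerDl //.
split.
  move=> A mA; split.
    move=> a x y; rewrite /mD -Dlin; try exact: (@ind_inL2 _ _ _ P).
    congr D; apply: funext => w.
    by rewrite scalerDr !scalerA mulrC.
  exists `|C| => u; apply: le_trans (bnd _ u mA) _.
  apply: ler_wpM2l => //; apply: ler_piMr => //.
  have /andP[h0 h1] := @fineP_le1 _ _ _ P _ mA.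
  by rewrite -(sqrtr1 R) ler_sqrt.
split.
  move=> u.
  have h := addD set0 set0 set0 u measurable0 measurable0.
  have e := h (fun w => ltac:(by rewrite indic0 /= addr0)). have : mD D set0 u - mD D set0 u = (mD D set0 u + mD D set0 u) - mD D set0 u.
    by rewrite -e.
  by rewrite subrr addrK.
move=> A mA tA.
pose Bn n := \bigcup_(k in [set k | (n <= k)%N]) A k.
have mBn n : measurable (Bn n) by apply: bigcup_measurable => k _; exact: mA.
have Bn0 : Bn 0 = \bigcup_i A i.
  by apply/seteqP; split => x [k _ Ax]; exists k.
have disj i j x : A i x -> A j x -> i = j.
  by move=> ai aj; apply: tA => //; exists x.
have indB n w : \1_(Bn n) w = \1_(A n) w + \1_(Bn n.+1) w :> R.
  rewrite !indicE.
  case: (pselect (A n w)) => an.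
    rewrite (@mem_set _ (A n)) // (@mem_set _ (Bn n)); last by exists n => /=.
    rewrite (@memNset _ (Bn n.+1)) ?addr0 //.
    by move=> [k /= nk ak]; have := disj _ _ _ an ak => e; rewrite e ltnn in nk.
  rewrite (@memNset _ (A n)) // add0r.
  case: (pselect (Bn n.+1 w)) => bn.
    rewrite !mem_set //; case: bn => k /= nk ak; exists k => //=; exact: ltnW.
  rewrite !memNset // => -[k /= nk ak].
  move: nk; rewrite leq_eqVlt => /orP[/eqP e|nk]; first by apply: an; rewrite e.
  by apply: bn; exists k.
have decomp n u : mD D (\bigcup_i A i) u = \sum_(i < n) mD D (A i) u + mD D (Bn n) u.
  elim: n => [|n IH]; first by rewrite big_ord0 add0r Bn0.
  by rewrite IH big_ord_recr /= -addrA -(addD _ _ (Bn n) u (mA n) (mBn n.+1) (indB n)).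
pose g n := `|C| * Num.sqrt (fine (P (Bn n))).
have ub n : ubound [set `|mD D (Bn n) u| | u in [set u : H | `|u| <= 1]] (g n).
  move=> _ [u /= hu <-]; apply: le_trans (bnd _ u (mBn n)) _; rewrite /g.
  apply: ler_wpM2l => //; rewrite -[X in _ <= X]mul1r; apply: ler_wpM2r; [exact: sqrtr_ge0 | exact: hu].
have in0 n : [set `|mD D (Bn n) u| | u in [set u : H | `|u| <= 1]] `|mD D (Bn n) 0|.
  by exists 0 => //=; rewrite normr0 ler01.
apply: (@squeeze_cvgr _ _ _ _ (fun=> 0) g).
- near=> n.
  have fn u : mD D (\bigcup_i A i) u - \sum_(i < n) mD D (A i) u = mD D (Bn n) u.
    by rewrite (decomp n u) addrC addKr.
  rewrite /opnorm (@eq_imagel _ _ _ _ (fun u => `|mD D (Bn n) u|)); last by move=> u _; rewrite fn.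
  apply/andP; split.
    apply: le_trans (normr_ge0 (mD D (Bn n) 0)) _.
    apply: ub_le_sup; last exact: in0.
    by exists (g n); exact: ub.
  by apply: ge_sup; [exists `|mD D (Bn n) 0|; exact: in0 | exact: ub].
- exact: cvg_cst.
- have niB : {homo Bn : n m / (n <= m)%N >-> (m <= n)%O}.
    move=> n m nm; apply/subsetPset => x [k /= mk Ak]; exists k => //=.
    exact: leq_trans nm mk.
  have capE : \bigcap_n Bn n = set0.
    apply/seteqP; split => // x hx.
    have [k _ Ak] := hx 0%N I.
    have [j /= kj Aj] := hx k.+1 I.
    by have := disj _ _ _ Ak Aj => e; rewrite e ltnn in kj.
  have hB := @nonincreasing_cvg_mu _ _ _ P Bn
    (ltac:(by apply: le_lt_trans (probability_le1 P (mBn 0%N)) _; exact: ltry)) mBn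
    (ltac:(by apply: bigcap_measurable; [exists 0%N | move=> k _; exact: mBn])) niB.
  rewrite capE measure0 in hB.
  have hf : (fine \o (P \o Bn)) x @[x --> \oo] --> 0 by apply: fine_cvg; exact: hB.
  have hs := cvg_comp _ _ hf (@sqrt_continuous R 0).
  have := cvgM (cvg_cst `|C|) hs.
  rewrite sqrtr0 mulr0 => h; exact: h.
Unshelve. all: by end_near.
Qed.
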